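(* The functions $\operatorname{IsCode}(n)$, $\operatorname{Len}(n)$, $\operatorname{SymbolAt}(n,i)$, $\operatorname{Concat}(n,m)$, and $\operatorname{Sub}_Z(n,m)$ are primitive recursive.
   Context: Fibonacci numbers: $F_1=1$, $F_2=2$, $F_n=F_{n-1}+F_{n-2}$. Each $n$ has a unique Zeckendorf representation $n=\sum_{e\in S}F_e$ with no two consecutive indices; $Z(n)=S$, listed $e_1>e_2>\cdots$. Cantor pairing $\mathrm{pair}(x,y)=\frac{(x+y)(x+y+1)}{2}+x$ with inverse $\mathrm{unpair}$. $\operatorname{Seq}_Z([a_1,\dots,a_m])=\sum_{i=1}^m F_{2\,\mathrm{pair}(a_i,i)+1}$, empty sequence $\mapsto 0$. $\operatorname{IsCode}(n)$ holds iff $Z(n)$ consists of odd indices with gaps of at least 2. $\operatorname{Len}(n)=|Z(n)|$ if $\operatorname{IsCode}(n)$, else $0$. $\operatorname{SymbolAt}(n,i)=a$ if $\operatorname{IsCode}(n)$, $1\le i\le\operatorname{Len}(n)$ and the $i$-th index $e_i$ (in decreasing order) satisfies $\mathrm{unpair}((e_i-1)/2)=(a,i)$; otherwise $0$. For valid codes $n,m$ decoding to sequences $[a_1,\dots,a_k]$ and $[b_1,\dots,b_l]$, $\operatorname{Concat}(n,m)=\operatorname{Seq}_Z([a_1,\dots,a_k,b_1,\dots,b_l])$. Formulas and terms of a fixed first-order language are coded by $\operatorname{Seq}_Z$ of their sequences of symbol numbers; for $n$ coding a formula $\varphi(x)$ with free variable $x$ and $m$ coding a term $t$, $\operatorname{Sub}_Z(n,m)$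 is obtained by decoding $n$ to its symbol sequence, replacing each occurrence of $\ulcorner x\urcorner$ by the decoded symbol sequence of $m$, and re-encoding via $\operatorname{Seq}_Z$. *)

(* Defs.v *)
From mathcomp Require Import all_boot.
Set Implicit Arguments. Unset Strict Implicit. Unset Printing Implicit Defensive.

Definition prec k (g : k.-tuple nat -> nat) (h : k.+2.-tuple nat -> nat)
    (v : k.+1.-tuple nat) : nat :=
  let w := behead_tuple v in
  (fix F (n : nat) : nat :=
     match n with
     | 0 => g w
     | n'.+1 => h (cons_tuple n' (cons_tuple (F n') w))
     end) (thead v).

Inductive PRf : forall k : nat, (k.-tuple nat -> nat) -> Prop :=
| PRf_zero k : @PRf k (fun _ => 0)
| PRf_succ : @PRf 1 (fun v => (thead v).+1)
| PRf_proj k (i : 'I_k) : @PRf k (fun v => tnth v i)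
| PRf_comp k m (g : m.-tuple nat -> nat) (h : 'I_m -> k.-tuple nat -> nat) :
    @PRf m g -> (forall i, @PRf k (h i)) ->
    @PRf k (fun v => g [tuple h i v | i < m])
| PRf_rec k (g : k.-tuple nat -> nat) (h : k.+2.-tuple nat -> nat) :
    @PRf k g -> @PRf k.+2 h -> @PRf k.+1 (prec g h).

Definition primrec k (f : k.-tuple nat -> nat) : Prop :=
  exists g, @PRf k g /\ forall v, g v = f v.

Definition primrec1 (f : nat -> nat) : Prop :=
  @primrec 1 (fun v => f (tnth v ord0)).
Definition primrec2 (f : nat -> nat -> nat) : Prop :=
  @primrec 2 (fun v => f (tnth v ord0) (tnth v (lift ord0 ord0))).
Definition primrec_pred1 (P : nat -> bool) : Prop :=
  primrec1 (fun n => nat_of_bool (P n)).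

(* ---------- Fibonacci numbers F_1 = 1, F_2 = 2 (F_0 := 1 is unused) ---------- *)
Fixpoint fibp (n : nat) : nat * nat :=
  match n with
  | 0 => (1, 1)
  | n'.+1 => let p := fibp n' in (p.2, p.2 + p.1)
  end.
Definition fib (n : nat) : nat := (fibp n).1.

(* greedy step: the largest index e >= 1 with F_e <= n (for n >= 1).
   Since F is increasing (F_1 < F_2 < ...), we count e upward from 1 while
   F_(e+1) <= n; the fuel n suffices because F_e >= e. *)
Fixpoint zeck_top_aux (fuel e n : nat) : nat :=
  match fuel with
  | 0 => e
  | fuel'.+1 => if fib e.+1 <= n then zeck_top_aux fuel' e.+1 n else e
  end.
Definition zeck_top (n : nat) : nat := zeck_top_aux n 1 n.

Fixpoint zeck_rec (fuel n : nat) : seq nat :=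
  match fuel with
  | 0 => [::]
  | fuel'.+1 =>
      if n == 0 then [::]
      else zeck_top n :: zeck_rec fuel' (n - fib (zeck_top n))
  end.

Definition zeck (n : nat) : seq nat := zeck_rec n n.

Definition cpair (x y : nat) : nat := (x + y) * (x + y + 1) %/ 2 + x.

Definition tri (w : nat) : nat := w * (w + 1) %/ 2.
Definition cunpair (z : nat) : nat * nat :=
  let w := foldr maxn 0 [seq w <- iota 0 z.+1 | tri w <= z] in
  (z - tri w, w - (z - tri w)).

Definition SeqZ (s : seq nat) : nat :=
  sumn [seq fib (2 * cpair (nth 0 s i) i.+1 + 1) | i <- iota 0 (size s)].

Definition IsCode (n : nat) : bool :=
  all odd (zeck n) && sorted (fun a b => b + 2 <= a) (zeck n).

Definition Len (n : nat) : nat := if IsCode n then size (zeck n) else 0.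

(* SymbolAt n i = a where e is an index of Z(n) with unpair((e-1)/2) = (a,i)
   (the first such e in decreasing order, if several); 0 if there is none,
   if n is not a code, or if i is out of range. *)
Definition SymbolAt (n i : nat) : nat :=
  if IsCode n && (1 <= i <= Len n) then
    let ps := [seq cunpair ((e - 1) %/ 2) | e <- zeck n] in
    (nth (0, 0) ps (find (fun ai => ai.2 == i) ps)).1
  else 0.

Definition decode (n : nat) : seq nat := [seq SymbolAt n i | i <- iota 1 (Len n)].

Definition Concat (n m : nat) : nat := SeqZ (decode n ++ decode m).

(* vx is the symbol number of the variable x *)
Definition SubZ (vx : nat) (n m : nat) : nat :=
  SeqZ (flatten [seq (if a == vx then decode m else [:: a]) | a <- decode n]).

(* Main.v *)
Require Import Defs.
From mathcomp Require Import all_boot zify.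
From Stdlib Require Import FunctionalExtensionality.
Set Implicit Arguments. Unset Strict Implicit. Unset Printing Implicit Defensive.

Lemma PRf_ext k (f g : k.-tuple nat -> nat) : PRf f -> (forall v, f v = g v) -> PRf g.
Proof. by move=> H E; have <- : f = g by apply: functional_extensionality. Qed.

Lemma nth0_mktuple m (f : 'I_m -> nat) i (Hi : i < m) :
  nth 0 [tuple f j | j < m] i = f (Ordinal Hi).
Proof. by have := tnth_mktuple f (Ordinal Hi); rewrite (tnth_nth 0). Qed.

Lemma pr_compg k m (g : m.-tuple nat -> nat) (hs : nat -> k.-tuple nat -> nat)
  (F : k.-tuple nat -> nat) :
  PRf g -> (forall i, i < m -> PRf (hs i)) ->
  (forall v (w : m.-tuple nat), (forall i, i < m -> nth 0 w i = hs i v) -> F v = g w) ->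
  PRf F.
Proof.
move=> Hg Hh E.
have := @PRf_comp k m g (fun i : 'I_m => hs i) Hg (fun i => Hh i (ltn_ord i)).
move/PRf_ext; apply=> v; symmetry; apply: E => i Hi.
by rewrite nth0_mktuple.
Qed.

Lemma pr_nth k i : i < k -> PRf (fun v : k.-tuple nat => nth 0 v i).
Proof.
move=> Hi; apply: (PRf_ext (PRf_proj (Ordinal Hi))) => v.
by rewrite (tnth_nth 0).
Qed.

Lemma pr_succ k (a : k.-tuple nat -> nat) : PRf a -> PRf (fun v => (a v).+1).
Proof.
move=> Ha; apply: (pr_compg (hs := fun _ => a) PRf_succ) => // v w E.
by rewrite /thead (tnth_nth 0) E.
Qed.

Lemma pr_const k c : PRf (fun _ : k.-tuple nat => c).
Proof. elim: c => [|c IH]; [exact: PRf_zero | exact: pr_succ]. Qed.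

Fixpoint nrec (z : nat) (s : nat -> nat -> nat) (n : nat) : nat :=
  match n with 0 => z | n'.+1 => s n' (nrec z s n') end.

Lemma prec_eq k (g : k.-tuple nat -> nat) (h : k.+2.-tuple nat -> nat) t :
  prec g h t = nrec (g (behead_tuple t))
     (fun n r => h (cons_tuple n (cons_tuple r (behead_tuple t)))) (thead t).
Proof. rewrite /prec; move: (thead t) => n; elim: n => //= n ->. by []. Qed.

Lemma behead_cons k (a : nat) (v : k.-tuple nat) : behead_tuple (cons_tuple a v) = v.
Proof. exact: val_inj. Qed.

Lemma pr_rec k (g : k.-tuple nat -> nat) (h : k.+2.-tuple nat -> nat) x :
  PRf g -> PRf h -> PRf x ->
  PRf (fun v => nrec (g v) (fun n r => h (cons_tuple n (cons_tuple r v))) (x v)).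
Proof.
move=> Hg Hh Hx.
apply: (pr_compg (hs := fun i => if i == 0 then x else fun v => nth 0 v i.-1)
          (PRf_rec Hg Hh)).
  by case=> [|i] //= Hi; apply: pr_nth.
move=> v w E.
have -> : w = cons_tuple (x v) v.
  apply: val_inj; apply: (@eq_from_nth _ 0); first by rewrite !size_tuple.
  by rewrite size_tuple => -[|i] Hi; rewrite E.
by rewrite prec_eq behead_cons.
Qed.

Definition PR1 (G : nat -> nat) := PRf (fun v : 1.-tuple nat => G (nth 0 v 0)).
Definition PR2 (G : nat -> nat -> nat) :=
  PRf (fun v : 2.-tuple nat => G (nth 0 v 0) (nth 0 v 1)).
Definition PR3 (G : nat -> nat -> nat -> nat) :=
  PRf (fun v : 3.-tuple nat => G (nth 0 v 0) (nth 0 v 1) (nth 0 v 2)).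

Lemma pr_app1 G k (a : k.-tuple nat -> nat) : PR1 G -> PRf a -> PRf (fun v => G (a v)).
Proof.
move=> HG Ha; apply: (pr_compg (hs := fun _ => a) HG) => //.
by move=> v w E; rewrite E.
Qed.

Lemma pr_app2 G k (a b : k.-tuple nat -> nat) :
  PR2 G -> PRf a -> PRf b -> PRf (fun v => G (a v) (b v)).
Proof.
move=> HG Ha Hb; apply: (pr_compg (hs := fun i => if i == 0 then a else b) HG).
  by case=> [|i].
by move=> v w E; rewrite !E.
Qed.

Lemma pr_app3 G k (a b c : k.-tuple nat -> nat) :
  PR3 G -> PRf a -> PRf b -> PRf c -> PRf (fun v => G (a v) (b v) (c v)).
Proof.
move=> HG Ha Hb Hc.
apply: (pr_compg (hs := fun i => if i == 0 then a else if i == 1 then b else c) HG).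
  by case=> [|[|i]].
by move=> v w E; rewrite !E.
Qed.

Definition tl2 k (u : k.+2.-tuple nat) : k.-tuple nat := behead_tuple (behead_tuple u).

Lemma pr_drop1 k (f : k.+1.-tuple nat -> nat) :
  PRf f -> PRf (fun u : k.+2.-tuple nat => f (cons_tuple (nth 0 u 0) (tl2 u))).
Proof.
move=> Hf; apply: (pr_compg (hs := fun i => fun u => nth 0 u (if i == 0 then 0 else i.+1)) Hf).
  by case=> [|i] Hi; apply: pr_nth.
move=> u w E; congr f; apply: val_inj; apply: (@eq_from_nth _ 0).
  by rewrite !size_tuple.
by rewrite size_tuple => -[|i] Hi; rewrite E //= !nth_behead.
Qed.

Lemma pr_big k (idx : nat) (op : Monoid.law idx) (f : k.+1.-tuple nat -> nat) (b : k.-tuple nat -> nat) :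
  PR2 op -> PRf f -> PRf b ->
  PRf (fun v => \big[op/idx]_(j < b v) f (cons_tuple (j : nat) v)).
Proof.
move=> Hop Hf Hb.
have Hh := pr_app2 Hop (pr_nth (k:=k.+2) (i:=1) erefl) (pr_drop1 Hf).
apply: (PRf_ext (pr_rec (pr_const _ idx) Hh Hb)) => v /=.
elim: (b v) => [|n IH] /=; first by rewrite big_ord0.
rewrite big_ord_recr /= -IH; congr (op _ (f _)).
by apply: val_inj.
Qed.

Lemma PR2_add : PR2 addn.
Proof.
apply: (PRf_ext (pr_rec (g := fun v => nth 0 v 1) (h := fun u : 4.-tuple nat => (nth 0 u 1).+1)
   (x := fun v => nth 0 v 0) _ _ _)).
- exact: pr_nth.
- exact: pr_succ (pr_nth _).
- exact: pr_nth.
move=> v /=; elim: (nth 0 v 0) => //= n ->; by [].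
Qed.

Lemma pr_add k (a b : k.-tuple nat -> nat) : PRf a -> PRf b -> PRf (fun v => a v + b v).
Proof. exact: pr_app2 PR2_add. Qed.

Lemma PR1_pred : PR1 predn.
Proof.
apply: (PRf_ext (pr_rec (g := fun v => 0) (h := fun u : 3.-tuple nat => nth 0 u 0)
   (x := fun v => nth 0 v 0) _ _ _)).
- exact: pr_const.
- exact: pr_nth.
- exact: pr_nth.
by move=> v /=; case: (nth 0 v 0).
Qed.

Lemma pr_pred k (a : k.-tuple nat -> nat) : PRf a -> PRf (fun v => (a v).-1).
Proof. exact: pr_app1 PR1_pred. Qed.

Lemma PR2_sub : PR2 subn.
Proof.
apply: (PRf_ext (pr_rec (g := fun v => nth 0 v 0) (h := fun u : 4.-tuple nat => (nth 0 u 1).-1)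
   (x := fun v => nth 0 v 1) _ _ _)).
- exact: pr_nth.
- exact: pr_pred (pr_nth _).
- exact: pr_nth.
move=> v /=; elim: (nth 0 v 1) => /= [|n ->]; first by rewrite subn0.
by rewrite subnS.
Qed.

Lemma pr_sub k (a b : k.-tuple nat -> nat) : PRf a -> PRf b -> PRf (fun v => a v - b v).
Proof. exact: pr_app2 PR2_sub. Qed.

Lemma PR2_mul : PR2 muln.
Proof.
apply: (PRf_ext (pr_rec (g := fun v => 0) (h := fun u : 4.-tuple nat => nth 0 u 1 + nth 0 u 3)
   (x := fun v => nth 0 v 0) _ _ _)).
- exact: pr_const.
- by apply: pr_add; apply: pr_nth.
- exact: pr_nth.
move=> v /=; elim: (nth 0 v 0) => //= n ->; by rewrite mulSn addnC.
Qed.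

Lemma pr_mul k (a b : k.-tuple nat -> nat) : PRf a -> PRf b -> PRf (fun v => a v * b v).
Proof. exact: pr_app2 PR2_mul. Qed.

Lemma pr_leq k (a b : k.-tuple nat -> nat) : PRf a -> PRf b ->
  PRf (fun v => nat_of_bool (a v <= b v)).
Proof.
move=> Ha Hb; apply: (PRf_ext (pr_sub (pr_const _ 1) (pr_sub Ha Hb))) => v.
by rewrite /leq; case: (a v - b v).
Qed.

Lemma pr_eq k (a b : k.-tuple nat -> nat) : PRf a -> PRf b ->
  PRf (fun v => nat_of_bool (a v == b v)).
Proof.
move=> Ha Hb; apply: (PRf_ext (pr_mul (pr_leq Ha Hb) (pr_leq Hb Ha))) => v.
by rewrite eqn_leq; case: (a v <= b v); case: (b v <= a v).
Qed.

Lemma pr_and k (a b : k.-tuple nat -> bool) : PRf (fun v => nat_of_bool (a v)) ->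
  PRf (fun v => nat_of_bool (b v)) -> PRf (fun v => nat_of_bool (a v && b v)).
Proof.
move=> Ha Hb; apply: (PRf_ext (pr_mul Ha Hb)) => v.
by case: (a v); case: (b v).
Qed.

Lemma pr_neg k (a : k.-tuple nat -> bool) : PRf (fun v => nat_of_bool (a v)) ->
  PRf (fun v => nat_of_bool (~~ a v)).
Proof.
move=> Ha; apply: (PRf_ext (pr_sub (pr_const _ 1) Ha)) => v.
by case: (a v).
Qed.

Lemma pr_if k (c : k.-tuple nat -> bool) (a b : k.-tuple nat -> nat) :
  PRf (fun v => nat_of_bool (c v)) -> PRf a -> PRf b ->
  PRf (fun v => if c v then a v else b v).
Proof.
move=> Hc Ha Hb.
apply: (PRf_ext (pr_add (pr_mul Hc Ha) (pr_mul (pr_sub (pr_const _ 1) Hc) Hb))) => v.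
by case: (c v) => /=; rewrite ?mul1n ?mul0n ?addn0.
Qed.

Lemma PR1_odd : PR1 (fun n => nat_of_bool (odd n)).
Proof.
apply: (PRf_ext (pr_rec (g := fun v => 0) (h := fun u : 3.-tuple nat => 1 - nth 0 u 1)
   (x := fun v => nth 0 v 0) _ _ _)).
- exact: pr_const.
- by apply: pr_sub; [apply: pr_const| apply: pr_nth].
- exact: pr_nth.
move=> v /=; elim: (nth 0 v 0) => //= n ->; by case: (odd n).
Qed.

Lemma pr_odd k (a : k.-tuple nat -> nat) : PRf a -> PRf (fun v => nat_of_bool (odd (a v))).
Proof. exact: pr_app1 PR1_odd. Qed.

Lemma pr_sum k (f : k.+1.-tuple nat -> nat) b : PRf f -> PRf b ->
  PRf (fun v => \sum_(j < b v) f (cons_tuple (j : nat) v)).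
Proof. by move=> Hf Hb; apply: (@pr_big k 0 addn) => //; apply: PR2_add. Qed.

Lemma pr_prod k (f : k.+1.-tuple nat -> nat) b : PRf f -> PRf b ->
  PRf (fun v => \prod_(j < b v) f (cons_tuple (j : nat) v)).
Proof. by move=> Hf Hb; apply: (@pr_big k 1 muln) => //; apply: PR2_mul. Qed.

Lemma PR2_max : PR2 maxn.
Proof.
apply: (PRf_ext (pr_add (pr_nth (k:=2) (i:=0) erefl) (pr_sub (pr_nth (k:=2) (i:=1) erefl) (pr_nth (k:=2) (i:=0) erefl)))) => v.
by rewrite maxnE.
Qed.

Lemma pr_max k (f : k.+1.-tuple nat -> nat) b : PRf f -> PRf b ->
  PRf (fun v => \big[maxn/0]_(j < b v) f (cons_tuple (j : nat) v)).
Proof. by move=> Hf Hb; apply: (@pr_big k 0 maxn) => //; apply: PR2_max. Qed.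

Lemma sum_lt x q : \sum_(j < x) (j < q) = minn q x.
Proof.
elim: x => [|x IH]; first by rewrite big_ord0 minn0.
rewrite big_ord_recr /= IH.
by case: (ltnP x q) => H /=; lia.
Qed.

Lemma div_sum x d : x %/ d = (0 < d) * \sum_(j < x) ((j.+1) * d <= x).
Proof.
case: d => [|d]; first by rewrite divn0.
rewrite mul1n.
under eq_bigr => j _ do rewrite -leq_divRL //.
rewrite sum_lt; apply/esym/minn_idPl.
by rewrite leq_div.
Qed.

Lemma PR2_div : PR2 divn.
Proof.
apply: (PRf_ext (pr_mul (pr_leq (pr_const _ 1) (pr_nth (k:=2) (i:=1) erefl))
   (pr_sum (f := fun u : 3.-tuple nat => nat_of_bool ((nth 0 u 0).+1 * nth 0 u 2 <= nth 0 u 1))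
          (b := fun v => nth 0 v 0) _ _))).
all: try by move=> v; rewrite div_sum.
all: by repeat first [apply pr_leq | apply pr_mul | apply pr_succ | apply pr_nth; done].
Qed.

Lemma pr_div k (a b : k.-tuple nat -> nat) : PRf a -> PRf b -> PRf (fun v => a v %/ b v).
Proof. exact: pr_app2 PR2_div. Qed.

Ltac pr_extra := fail.
Ltac prt1 := match goal with
  | |- PRf (fun _ => ?c) => apply pr_const
  | |- PRf (fun v => nth 0 (@?t v) ?i) => apply pr_nth; done
  | |- PRf (fun v => @?a v + @?b v) => apply pr_add
  | |- PRf (fun v => @?a v - @?b v) => apply pr_sub
  | |- PRf (fun v => @?a v * @?b v) => apply pr_mul
  | |- PRf (fun v => (@?a v).+1) => apply pr_succ
  | |- PRf (fun v => (@?a v).-1) => apply pr_pred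
  | |- PRf (fun v => @?a v %/ @?b v) => apply pr_div
  | |- PRf (fun v => nat_of_bool (@?a v <= @?b v)) => apply pr_leq
  | |- PRf (fun v => nat_of_bool (@?a v == @?b v)) => apply pr_eq
  | |- PRf (fun v => nat_of_bool (@?a v && @?b v)) => apply pr_and
  | |- PRf (fun v => nat_of_bool (~~ @?a v)) => apply pr_neg
  | |- PRf (fun v => nat_of_bool (odd (@?a v))) => apply pr_odd
  | |- _ => first [pr_extra | apply pr_if]
  end.
Ltac prt := repeat prt1.

Lemma PR1_tri : PR1 tri.
Proof. rewrite /PR1 /tri; prt. Qed.
Lemma pr_tri k (a : k.-tuple nat -> nat) : PRf a -> PRf (fun v => tri (a v)).
Proof. exact: pr_app1 PR1_tri. Qed.

Definition W z := \big[maxn/0]_(j < z.+1) (if tri j <= z then (j : nat) else 0).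

Lemma PR1_W : PR1 W.
Proof.
rewrite /PR1 /W.
apply: (pr_max (f := fun u : 2.-tuple nat => if tri (nth 0 u 0) <= nth 0 u 1 then nth 0 u 0 else 0)
   (b := fun v => (nth 0 v 0).+1)).
- apply: pr_if; [apply: pr_leq; [apply: pr_tri|]|..]; prt.
- prt.
Qed.

Lemma foldr_maxn_filter (P : pred nat) s :
  foldr maxn 0 [seq w <- s | P w] = \big[maxn/0]_(w <- s) (if P w then w else 0).
Proof.
elim: s => [|x s IH] /=; first by rewrite big_nil.
by rewrite big_cons -IH; case: (P x) => //=; rewrite max0n.
Qed.

Lemma W_eq z : foldr maxn 0 [seq w <- iota 0 z.+1 | tri w <= z] = W z.
Proof. by rewrite foldr_maxn_filter /W -(big_mkord (fun _ => true) (fun j => if tri j <= z then j else 0)) /index_iota subn0. Qed.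

Definition cu1 z := (cunpair z).1.
Definition cu2 z := (cunpair z).2.

Lemma cu1E z : cu1 z = z - tri (W z).
Proof. by rewrite /cu1 /cunpair W_eq. Qed.
Lemma cu2E z : cu2 z = W z - (z - tri (W z)).
Proof. by rewrite /cu2 /cunpair W_eq. Qed.

Lemma PR1_cu1 : PR1 cu1.
Proof.
apply: (PRf_ext (f := fun v => nth 0 v 0 - tri (W (nth 0 v 0)))); last by move=> v; rewrite cu1E.
apply: pr_sub; [prt| apply: pr_tri; apply: (pr_app1 PR1_W); prt].
Qed.
Lemma PR1_cu2 : PR1 cu2.
Proof.
apply: (PRf_ext (f := fun v => W (nth 0 v 0) - (nth 0 v 0 - tri (W (nth 0 v 0)))));
  last by move=> v; rewrite cu2E.
apply: pr_sub; [apply: (pr_app1 PR1_W); prt| apply: pr_sub; [prt|apply: pr_tri; apply: (pr_app1 PR1_W); prt]].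
Qed.

Lemma PR2_cpair : PR2 cpair.
Proof. rewrite /PR2 /cpair; prt. Qed.

Lemma triS s : tri s.+1 = tri s + s.+1.
Proof.
rewrite /tri.
have -> : s.+1 * (s.+1 + 1) = s.+1 * 2 + s * (s + 1) by nia.
by rewrite divnMDl // addnC.
Qed.

Lemma tri_mono m n : m <= n -> tri m <= tri n.
Proof. by move=> H; rewrite /tri leq_div2r // leq_mul // leq_add2r. Qed.

Lemma tri_ge s : s <= tri s.
Proof. rewrite /tri leq_divRL //; nia. Qed.

Lemma W_cpair s x : x <= s -> W (tri s + x) = s.
Proof.
move=> Hx; rewrite /W.
have E : forall j, (tri j <= tri s + x) = (j <= s).
  move=> j; case: (leqP j s) => H.
    by apply: leq_trans (tri_mono H) (leq_addr _ _).
  apply/negbTE; rewrite -ltnNge.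
  apply: leq_trans (tri_mono H); rewrite triS; lia.
under eq_bigr => j _ do rewrite E.
apply/eqP; rewrite eqn_leq; apply/andP; split.
  by apply/bigmax_leqP => j _; case: ifP.
have Hs : s < (tri s + x).+1 by rewrite ltnS; apply: leq_trans (tri_ge s) (leq_addr _ _).
by have := @leq_bigmax _ (fun j : 'I_(tri s + x).+1 => if (j : nat) <= s then (j:nat) else 0) (Ordinal Hs); rewrite /= leqnn.
Qed.

Lemma cunpair_cpair x y : cu1 (cpair x y) = x /\ cu2 (cpair x y) = y.
Proof.
have -> : cpair x y = tri (x + y) + x by [].
rewrite cu1E cu2E W_cpair ?leq_addr //.
split; lia.
Qed.

Definition fstate n := nrec (cpair 1 1) (fun _ s => cpair (cu2 s) (cu2 s + cu1 s)) n.

Lemma fstateE n : fstate n = cpair (fib n) (fib n.+1).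
Proof.
elim: n => //= n IH; rewrite /fstate /= -/(fstate n) IH.
have [-> ->] := cunpair_cpair (fib n) (fib n.+1).
by [].
Qed.

Lemma PR1_fib : PR1 fib.
Proof.
apply: (PRf_ext (f := fun v => cu1 (fstate (nth 0 v 0)))); last first.
  by move=> v; rewrite fstateE; case: (cunpair_cpair (fib (nth 0 v 0)) (fib (nth 0 v 0).+1)).
apply: (pr_app1 PR1_cu1).
rewrite /fstate.
apply: (pr_rec (g := fun _ => cpair 1 1)
   (h := fun u : 3.-tuple nat => cpair (cu2 (nth 0 u 1)) (cu2 (nth 0 u 1) + cu1 (nth 0 u 1)))
   (x := fun v => nth 0 v 0)); first exact: pr_const; last by prt.
apply: (pr_app2 PR2_cpair); last apply: pr_add; 
  try apply: (pr_app1 PR1_cu2); try apply: (pr_app1 PR1_cu1); prt.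
Qed.

Ltac pr_ex1 := match goal with
  | |- PRf (fun v => fib (@?a v)) => apply (pr_app1 PR1_fib)
  | |- PRf (fun v => cu1 (@?a v)) => apply (pr_app1 PR1_cu1)
  | |- PRf (fun v => cu2 (@?a v)) => apply (pr_app1 PR1_cu2)
  | |- PRf (fun v => cpair (@?a v) (@?b v)) => apply (pr_app2 PR2_cpair)
  | |- PRf (fun v => tri (@?a v)) => apply (pr_app1 PR1_tri)
  end.
Ltac pr_extra ::= pr_ex1.

Lemma fib_step n : fib n <= fib n.+1.
Proof. by case: n => [|n] //; rewrite /fib /= leq_addr. Qed.

Lemma fib_le m n : m <= n -> fib m <= fib n.
Proof. apply: (@homo_leq _ fib leq) => //; [exact: leq_trans | exact: fib_step]. Qed.

Lemma zeck_top_auxE fuel e n :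
  zeck_top_aux fuel e n = e + \sum_(k < fuel) (fib (e + k.+1) <= n).
Proof.
elim: fuel e => [|f IH] e /=; first by rewrite big_ord0 addn0.
rewrite big_ord_recl /=; case: ifP => H.
  rewrite IH addn1 H.
  rewrite (eq_bigr (fun k : 'I_f => nat_of_bool (fib (e.+1 + k.+1) <= n))) /=.
    by rewrite add1n addSn addnS.
  by move=> k _; rewrite /bump /= add1n addSnnS.
rewrite big1 ?addn1 ?H ?addn0 // => k _.
suff /negbTE -> : ~~ (fib (e + (bump 0 k).+1) <= n) by [].
rewrite -ltnNge.
apply: leq_trans (fib_le (_ : e + 1 <= e + (bump 0 k).+1)); first by rewrite addn1 ltnNge H.
by rewrite leq_add2l.
Qed.

Definition top r := 1 + \sum_(k < r) (fib (k : nat).+2 <= r).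

Lemma topE r : zeck_top r = top r.
Proof. by rewrite /zeck_top zeck_top_auxE. Qed.

Lemma PR1_top : PR1 top.
Proof.
rewrite /PR1 /top; apply: pr_add; first exact: pr_const.
apply: (pr_sum (f := fun u : 2.-tuple nat => nat_of_bool (fib (nth 0 u 0).+2 <= nth 0 u 1))
   (b := fun v => nth 0 v 0)); prt.
Qed.


Ltac pr_ex2 := match goal with
  | |- PRf (fun v => top (@?a v)) => apply (pr_app1 PR1_top)
  | |- _ => pr_ex1 end.
Ltac pr_extra ::= pr_ex2.

Definition step r := r - fib (top r).
Definition Rz n j := iter j step n.
Definition T n j := top (Rz n j).
Definition L n := \sum_(j < n) (Rz n j != 0).

Lemma PR2_Rz : PR2 Rz.
Proof.
apply: (PRf_ext (pr_rec (g := fun v => nth 0 v 0)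
   (h := fun u : 4.-tuple nat => nth 0 u 1 - fib (top (nth 0 u 1))) (x := fun v => nth 0 v 1) _ _ _)).
- prt.
- prt.
- prt.
move=> v /=; rewrite /Rz; elim: (nth 0 v 1) => //= n ->; by [].
Qed.

Lemma PR2_T : PR2 T.
Proof. rewrite /PR2 /T; apply: (pr_app1 PR1_top); apply: (pr_app2 PR2_Rz); prt. Qed.


Ltac pr_ex3 := match goal with
  | |- PRf (fun v => Rz (@?a v) (@?b v)) => apply (pr_app2 PR2_Rz)
  | |- PRf (fun v => T (@?a v) (@?b v)) => apply (pr_app2 PR2_T)
  | |- _ => pr_ex2 end.
Ltac pr_extra ::= pr_ex3.

Lemma PR1_L : PR1 L.
Proof.
rewrite /PR1 /L.
apply: (pr_sum (f := fun u : 2.-tuple nat => nat_of_bool (Rz (nth 0 u 1) (nth 0 u 0) != 0))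
   (b := fun v => nth 0 v 0)); prt.
Qed.


Ltac pr_ex4 := match goal with
  | |- PRf (fun v => L (@?a v)) => apply (pr_app1 PR1_L)
  | |- _ => pr_ex3 end.
Ltac pr_extra ::= pr_ex4.

Lemma iter_step0 j : iter j step 0 = 0.
Proof. by elim: j => //= j ->. Qed.

Lemma zeck_rec_filter fuel m :
  zeck_rec fuel m = [seq top (iter j step m) | j <- [seq j <- iota 0 fuel | iter j step m != 0]].
Proof.
elim: fuel m => [|f IH] m //=.
case: eqP => [->|Hm].
  rewrite /= (@eq_filter _ _ pred0) ?filter_pred0 // => j.
  by rewrite iter_step0.
rewrite /=.
rewrite topE IH -/(step m); congr (_ :: _).
rewrite (iotaDl 1 0) filter_map -map_comp.
rewrite (@eq_filter _ _ (fun j => iter j step (step m) != 0)); last first.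
  by move=> j; rewrite /preim /= add0n -iterS iterSr.
apply/eq_map => j /=.
by rewrite add0n -iterS iterSr.
Qed.

Lemma filter_prefix (P : pred nat) n : (forall j, P j.+1 -> P j) ->
  [seq j <- iota 0 n | P j] = iota 0 (count P (iota 0 n)).
Proof.
move=> HP.
have down : forall m j, P m -> j <= m -> P j.
  elim=> [|m IHm] j Pm; first by rewrite leqn0 => /eqP ->.
  rewrite leq_eqVlt => /orP [/eqP -> //|]; rewrite ltnS; apply: IHm; exact: HP.
elim: n => [|n IH] //.
rewrite -addn1 iotaD filter_cat count_cat IH /= add0n.
case: ifP => Pn.
  have -> : count P (iota 0 n) = n.
    have : all P (iota 0 n).
      by apply/allP => j; rewrite mem_iota add0n => /andP [_ Hj]; apply: down Pn (ltnW Hj).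
    by rewrite all_count size_iota => /eqP.
  by rewrite iotaD.
by rewrite cats0 /= !addn0.
Qed.

Lemma count_iota_sum (P : pred nat) n : count P (iota 0 n) = \sum_(j < n) P j.
Proof.
elim: n => [|n IH]; first by rewrite big_ord0.
have -> : iota 0 n.+1 = iota 0 n ++ [:: n] by rewrite -addn1 iotaD.
by rewrite big_ord_recr /= -IH count_cat /= !addn0.
Qed.

Lemma zeckE n : zeck n = [seq T n j | j <- iota 0 (L n)].
Proof.
rewrite /zeck zeck_rec_filter filter_prefix; last first.
  move=> j; apply: contraNN => /eqP; rewrite iterS => ->; by rewrite /step sub0n.
by rewrite count_iota_sum.
Qed.

Lemma all_iota (p : pred nat) m : nat_of_bool (all p (iota 0 m)) = \prod_(j < m) p j.
Proof.
elim: m => [|m IH]; first by rewrite big_ord0.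
have -> : iota 0 m.+1 = iota 0 m ++ [:: m] by rewrite -addn1 iotaD.
rewrite all_cat big_ord_recr /= -IH andbT.
by case: (all p _); case: (p m).
Qed.

Lemma sorted_map_iota (r : rel nat) f a m :
  sorted r (map f (iota a m.+1)) = all (fun j => r (f j) (f j.+1)) (iota a m).
Proof.
elim: m a => [|m IH] a //=.
by rewrite -IH.
Qed.

Lemma IsCodeE n : nat_of_bool (IsCode n) =
  (\prod_(j < L n) odd (T n j)) * (\prod_(j < (L n).-1) (T n (j : nat).+1 + 2 <= T n j)).
Proof.
rewrite /IsCode zeckE.
have -> : sorted (fun a b => b + 2 <= a) [seq T n j | j <- iota 0 (L n)]
   = all (fun j => T n j.+1 + 2 <= T n j) (iota 0 (L n).-1).
  by case: (L n) => [|l] //; rewrite sorted_map_iota.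
have E1 : \prod_(j < L n) odd (T n j) = all (preim (T n) odd) (iota 0 (L n)) by rewrite all_iota.
have E2 : \prod_(j < (L n).-1) (T n (j : nat).+1 + 2 <= T n j)
   = all (fun j => T n j.+1 + 2 <= T n j) (iota 0 (L n).-1) by rewrite all_iota.
rewrite E1 E2 all_map.
by case: (all _ _); case: (all _ _).
Qed.

Lemma PR1_IsCode : PR1 (fun n => nat_of_bool (IsCode n)).
Proof.
apply: (PRf_ext (f := fun v => (\prod_(j < L (nth 0 v 0)) odd (T (nth 0 v 0) j)) *
   (\prod_(j < (L (nth 0 v 0)).-1) (T (nth 0 v 0) (j : nat).+1 + 2 <= T (nth 0 v 0) j))));
  last by move=> v; rewrite IsCodeE.
apply: pr_mul.
  apply: (pr_prod (f := fun u : 2.-tuple nat => nat_of_bool (odd (T (nth 0 u 1) (nth 0 u 0))))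
     (b := fun v => L (nth 0 v 0))); prt.
apply: (pr_prod (f := fun u : 2.-tuple nat =>
     nat_of_bool (T (nth 0 u 1) (nth 0 u 0).+1 + 2 <= T (nth 0 u 1) (nth 0 u 0)))
   (b := fun v => (L (nth 0 v 0)).-1)); prt.
Qed.

Lemma LenE n : Len n = nat_of_bool (IsCode n) * L n.
Proof. by rewrite /Len zeckE size_map size_iota; case: (IsCode n); rewrite /= ?mul1n ?mul0n. Qed.

Lemma PR1_Len : PR1 Len.
Proof.
apply: (PRf_ext (f := fun v => nat_of_bool (IsCode (nth 0 v 0)) * L (nth 0 v 0)));
  last by move=> v; rewrite LenE.
apply: pr_mul; [apply: (pr_app1 PR1_IsCode)|]; prt.
Qed.

Lemma find_sum (X : Type) (a : pred X) (x0 : X) s :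
  find a s = \sum_(j < size s) \prod_(k < (j : nat).+1) ~~ a (nth x0 s k).
Proof.
elim: s => [|x s IH] /=; first by rewrite big_ord0.
rewrite big_ord_recl /= big_ord_recl big_ord0 /= muln1.
have E : forall j : 'I_(size s), \prod_(k < (bump 0 j).+1) ~~ a (nth x0 (x :: s) k)
    = ~~ a x * \prod_(k < (j : nat).+1) ~~ a (nth x0 s k).
  by move=> j; rewrite big_ord_recl.
rewrite (eq_bigr _ (fun j _ => E j)).
case: (a x) => /=.
  by rewrite big1 // => j _; rewrite mul0n.
by rewrite IH add1n; congr S; apply: eq_bigr => j _; rewrite mul1n.
Qed.

Definition Fd n i := \sum_(j < L n) \prod_(k < (j : nat).+1) ~~ (cu2 ((T n k - 1) %/ 2) == i).

Lemma SymE n i : SymbolAt n i = nat_of_bool (IsCode n && (1 <= i <= Len n)) *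
   ((Fd n i < L n) * cu1 ((T n (Fd n i) - 1) %/ 2)).
Proof.
rewrite /SymbolAt; case: ifP => _; last by rewrite mul0n.
rewrite mul1n zeckE -map_comp (find_sum _ (0,0)) size_map size_iota.
have -> : \sum_(j < L n) \prod_(k < (j : nat).+1)
    ~~ ((nth (0,0) [seq ((fun e => cunpair ((e - 1) %/ 2)) \o T n) j | j <- iota 0 (L n)] k).2 == i)
   = Fd n i.
  apply: eq_bigr => j _; apply: eq_bigr => k _.
  rewrite (nth_map 0); last by rewrite size_iota; exact: leq_trans (ltn_ord k) (ltn_ord j).
  by rewrite nth_iota ?add0n //; exact: leq_trans (ltn_ord k) (ltn_ord j).
case: ltnP => H.
  by rewrite (nth_map 0) ?size_iota // nth_iota // add0n mul1n.
by rewrite nth_default ?size_map ?size_iota.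
Qed.

Lemma PR2_Fd : PR2 Fd.
Proof.
rewrite /PR2 /Fd.
apply: (pr_sum (f := fun u : 3.-tuple nat => \prod_(k < (nth 0 u 0).+1)
     ~~ (cu2 ((T (nth 0 u 1) k - 1) %/ 2) == nth 0 u 2)) (b := fun v => L (nth 0 v 0))); last by prt.
apply: (pr_prod (f := fun w : 4.-tuple nat => ~~ (cu2 ((T (nth 0 w 2) (nth 0 w 0) - 1) %/ 2) == nth 0 w 3))
   (b := fun u => (nth 0 u 0).+1)); prt.
Qed.

Ltac pr_ex5 := match goal with
  | |- PRf (fun v => Fd (@?a v) (@?b v)) => apply (pr_app2 PR2_Fd)
  | |- PRf (fun v => nat_of_bool (IsCode (@?a v))) => apply (pr_app1 PR1_IsCode)
  | |- PRf (fun v => Len (@?a v)) => apply (pr_app1 PR1_Len)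
  | |- _ => pr_ex4 end.
Ltac pr_extra ::= pr_ex5.

Lemma PR2_Sym : PR2 SymbolAt.
Proof.
apply: (PRf_ext (f := fun v => nat_of_bool (IsCode (nth 0 v 0) && (1 <= nth 0 v 1 <= Len (nth 0 v 0))) *
   ((Fd (nth 0 v 0) (nth 0 v 1) < L (nth 0 v 0)) * cu1 ((T (nth 0 v 0) (Fd (nth 0 v 0) (nth 0 v 1)) - 1) %/ 2))));
  last by move=> v; rewrite SymE.
prt.
Qed.

Definition H a k := fib (2 * cpair a k + 1).
Lemma PR2_H : PR2 H.
Proof. rewrite /PR2 /H; prt. Qed.

Ltac pr_ex6 := match goal with
  | |- PRf (fun v => SymbolAt (@?a v) (@?b v)) => apply (pr_app2 PR2_Sym)
  | |- PRf (fun v => H (@?a v) (@?b v)) => apply (pr_app2 PR2_H)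
  | |- _ => pr_ex5 end.
Ltac pr_extra ::= pr_ex6.

Definition G o (s : seq nat) := \sum_(i < size s) H (nth 0 s i) (o + i).

Lemma big_iota0 n (F : nat -> nat) : \sum_(i <- iota 0 n) F i = \sum_(i < n) F i.
Proof. by rewrite -(big_mkord (fun _ => true) F) /index_iota subn0. Qed.

Lemma SeqZ_G s : SeqZ s = G 1 s.
Proof. by rewrite /SeqZ /G sumnE big_map big_iota0. Qed.

Lemma G_cat o s1 s2 : G o (s1 ++ s2) = G o s1 + G (o + size s1) s2.
Proof.
rewrite /G size_cat big_split_ord /=; congr (_ + _); apply: eq_bigr => i _.
  by rewrite nth_cat /= ltn_ord.
by rewrite nth_cat /= ltnNge leq_addr /= addKn addnA.
Qed.

Lemma G_flatten o ss : G o (flatten ss) =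
  \sum_(j < size ss) G (o + sumn (map size (take j ss))) (nth [::] ss j).
Proof.
elim: ss o => [|s ss IH] o /=; first by rewrite /G /= !big_ord0.
rewrite G_cat IH big_ord_recl /= addn0; congr (_ + _); apply: eq_bigr => j _.
by rewrite /= addnA.
Qed.

Lemma decodeE n : decode n = [seq SymbolAt n i.+1 | i <- iota 0 (Len n)].
Proof. by rewrite /decode (iotaDl 1 0) -map_comp. Qed.

Lemma size_decode n : size (decode n) = Len n.
Proof. by rewrite /decode size_map size_iota. Qed.

Lemma nth_decode n j : j < Len n -> nth 0 (decode n) j = SymbolAt n j.+1.
Proof. by move=> Hj; rewrite decodeE (nth_map 0) ?size_iota // nth_iota. Qed.

Lemma G_decode o n : G o (decode n) = \sum_(i < Len n) H (SymbolAt n i.+1) (o + i).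
Proof.
rewrite /G size_decode; apply: eq_bigr => i _; by rewrite nth_decode.
Qed.

Lemma ConcatE n m : Concat n m = \sum_(i < Len n) H (SymbolAt n i.+1) (1 + i)
   + \sum_(i < Len m) H (SymbolAt m i.+1) (1 + Len n + i).
Proof. by rewrite /Concat SeqZ_G G_cat !G_decode size_decode. Qed.

Lemma PR2_Concat : PR2 Concat.
Proof.
apply: (PRf_ext (f := fun v => \sum_(i < Len (nth 0 v 0)) H (SymbolAt (nth 0 v 0) (i : nat).+1) (1 + i)
   + \sum_(i < Len (nth 0 v 1)) H (SymbolAt (nth 0 v 1) (i : nat).+1) (1 + Len (nth 0 v 0) + i)));
  last by move=> v; rewrite ConcatE.
apply: pr_add.
  apply: (pr_sum (f := fun u : 3.-tuple nat => H (SymbolAt (nth 0 u 1) (nth 0 u 0).+1) (1 + nth 0 u 0))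
     (b := fun v => Len (nth 0 v 0))); prt.
apply: (pr_sum (f := fun u : 3.-tuple nat =>
     H (SymbolAt (nth 0 u 2) (nth 0 u 0).+1) (1 + Len (nth 0 u 1) + nth 0 u 0))
   (b := fun v => Len (nth 0 v 1))); prt.
Qed.

Definition Pz vx n m j := \sum_(j' < j) (if SymbolAt n (j' : nat).+1 == vx then Len m else 1).

Definition blk vx m (a : nat) := if a == vx then decode m else [:: a].

Lemma Pz_take vx n m j : j <= Len n ->
  sumn (map size (take j (map (blk vx m) (decode n)))) = Pz vx n m j.
Proof.
move=> Hj.
rewrite -map_take decodeE -map_take take_iota (minn_idPl Hj) -!map_comp sumnE big_map big_iota0.
apply: eq_bigr => i _; rewrite /= /blk.
by case: (_ == vx); rewrite /= ?size_decode.
Qed.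

Lemma G_blk vx m o a : G o (blk vx m a) =
  if a == vx then \sum_(i < Len m) H (SymbolAt m i.+1) (o + i) else H a o.
Proof.
rewrite /blk; case: (a == vx); first exact: G_decode.
by rewrite /G /= big_ord_recl big_ord0 /= !addn0.
Qed.

Definition Bk vx n m j := if SymbolAt n j.+1 == vx
  then \sum_(i < Len m) H (SymbolAt m (i : nat).+1) (1 + Pz vx n m j + i)
  else H (SymbolAt n j.+1) (1 + Pz vx n m j).

Lemma SubZE vx n m : SubZ vx n m = \sum_(j < Len n) Bk vx n m j.
Proof.
rewrite /SubZ SeqZ_G -/(blk vx m) G_flatten size_map size_decode.
apply: eq_bigr => j _.
rewrite (nth_map 0) ?size_decode // nth_decode // Pz_take ?(ltnW (ltn_ord j)) //.
by rewrite G_blk.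
Qed.

Lemma PR3_Pz vx : PR3 (Pz vx).
Proof.
rewrite /PR3 /Pz.
apply: (pr_sum (f := fun u : 4.-tuple nat =>
   if SymbolAt (nth 0 u 1) (nth 0 u 0).+1 == vx then Len (nth 0 u 2) else 1)
   (b := fun v => nth 0 v 2)); prt.
Qed.

Ltac pr_ex7 := match goal with
  | |- PRf (fun v => Pz ?vx (@?a v) (@?b v) (@?c v)) => apply (pr_app3 (PR3_Pz vx))
  | |- _ => pr_ex6 end.
Ltac pr_extra ::= pr_ex7.

Lemma PR2_SubZ vx : PR2 (SubZ vx).
Proof.
apply: (PRf_ext (f := fun v => \sum_(j < Len (nth 0 v 0)) Bk vx (nth 0 v 0) (nth 0 v 1) j));
  last by move=> v; rewrite SubZE.
apply: (pr_sum (f := fun u : 3.-tuple nat => Bk vx (nth 0 u 1) (nth 0 u 2) (nth 0 u 0))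
   (b := fun v => Len (nth 0 v 0))); last by prt.
rewrite /Bk; apply: pr_if; first by prt.
  apply: (pr_sum (f := fun w : 4.-tuple nat =>
     H (SymbolAt (nth 0 w 3) (nth 0 w 0).+1) (1 + Pz vx (nth 0 w 2) (nth 0 w 3) (nth 0 w 1) + nth 0 w 0))
     (b := fun u => Len (nth 0 u 2))); prt.
prt.
Qed.

Lemma PR1_primrec f : PR1 f -> primrec1 f.
Proof. move=> Hf; exists (fun v => f (nth 0 v 0)); split => // v; by rewrite (tnth_nth 0). Qed.

Lemma PR2_primrec f : PR2 f -> primrec2 f.
Proof. move=> Hf; exists (fun v => f (nth 0 v 0) (nth 0 v 1)); split => // v; by rewrite !(tnth_nth 0). Qed.

Theorem lemma5p9 :
  primrec_pred1 IsCode /\ primrec1 Len /\ primrec2 SymbolAt /\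
  primrec2 Concat /\ (forall vx : nat, primrec2 (SubZ vx)).
Proof.
split; first exact: PR1_primrec PR1_IsCode.
split; first exact: PR1_primrec PR1_Len.
split; first exact: PR2_primrec PR2_Sym.
split; first exact: PR2_primrec PR2_Concat.
move=> vx; exact: PR2_primrec (PR2_SubZ vx).
Qed.
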